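(* For every modal formula $A$ and label $x$, $\mathsf{labIGL}\vdash x:\Box(\Box A\to A)\to\Box A$; that is, the sequent $\emptyset\Rightarrow x:\Box(\Box A\to A)\to\Box A$ has an $\infty$-proof in $\mathsf{labIK4}$.
   Context: Modal formulas: $A ::= p \mid \bot \mid A\wedge A \mid A \vee A \mid A \to A \mid \Box A \mid \Diamond A$. Labelled sequents $\mathcal R,\Gamma\Rightarrow\Delta$ with $\mathcal R$ a set of relational atoms $xRy$ and $\Gamma,\Delta$ multisets of labelled formulas $x:A$. $\mathsf{labK4}$ rules (premisses / conclusion): id $\mathcal R,x:p\Rightarrow x:p$; $\bot$L $\mathcal R,x:\bot,\Gamma\Rightarrow\Delta$; cut: $\mathcal R,\Gamma\Rightarrow\Delta,x:A$ and $\mathcal R,\Gamma',x:A\Rightarrow\Delta'$ / $\mathcal R,\Gamma,\Gamma'\Rightarrow\Delta,\Delta'$; left/right weakening and contraction; thinning $\mathcal R,\Gamma\Rightarrow\Delta$ / $\mathcal R,\mathcal R',\Gamma\Rightarrow\Delta$; $\to$L: $\mathcal R,\Gamma\Rightarrow\Delta,x:A$ and $\mathcal R,\Gamma',x:B\Rightarrow\Delta'$ / $\mathcal R,\Gamma,\Gamma',x:A\to B\Rightarrow\Delta,\Delta'$; $\to$R: $\mathcal R,\Gamma,x:A\Rightarrow\Delta,x:B$ / $\mathcal R,\Gamma\Rightarrow\Delta,x:A\to B$; $\wedge$L, $\wedge$R, $\vee$L, $\vee$R as in Gentzen's LK on labelled formulas with the same label; $\Diamond$L ($y$ fresh): $\mathcal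 R,xRy,\Gamma,y:A\Rightarrow\Delta$ / $\mathcal R,\Gamma,x:\Diamond A\Rightarrow\Delta$; $\Diamond$R: $\mathcal R,xRy,\Gamma\Rightarrow\Delta,y:A$ / $\mathcal R,xRy,\Gamma\Rightarrow\Delta,x:\Diamond A$; $\Box$R ($y$ fresh): $\mathcal R,xRy,\Gamma\Rightarrow\Delta,y:A$ / $\mathcal R,\Gamma\Rightarrow\Delta,x:\Box A$; $\Box$L: $\mathcal R,xRy,\Gamma,y:A\Rightarrow\Delta$ / $\mathcal R,xRy,\Gamma,x:\Box A\Rightarrow\Delta$; tr: $\mathcal R,xRy,yRz,xRz,\Gamma\Rightarrow\Delta$ / $\mathcal R,xRy,yRz,\Gamma\Rightarrow\Delta$. $\mathsf{labIK4}$ is the restriction to sequents with exactly one labelled formula on the right. A preproof is a possibly infinite tree of rule instances whose leaves are zero-premiss rules; a trace along an infinite branch $(S_i)$ is a sequence of labels $(x_i)_{i\ge k}$ with, for each $i$, $x_i=x_{i+1}$ or $x_iRx_{i+1}$ in the relational context of $S_i$ (progress point); progressing = infinitely many progress points; an $\infty$-proof is a preproof all of whose infinite branches have a progressing trace. $\mathsf{labIGL}$ is the class of $\infty$-proofs of $\mathsf{labIK4}$. *)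

(* Defs.v *)
From Stdlib Require Import List Permutation Arith.
Import ListNotations.

Inductive form : Type :=
| Var : nat -> form
| Bot : form
| And : form -> form -> form
| Or  : form -> form -> form
| Imp : form -> form -> form
| Box : form -> form
| Dia : form -> form.

Definition label := nat.
Definition lform : Type := (label * form)%type.
Definition ratom : Type := (label * label)%type.

(* Labelled sequent R, Gamma => Delta.  R is a set (represented by a list,
   compared up to membership); Gamma, Delta are multisets (lists compared up
   to permutation). *)
Record sequent : Type := Seq { rel : list ratom; lhs : list lform; rhs : list lform }.

Definition labels_rel (R : list ratom) : list label :=
  flat_map (fun a => [fst a; snd a]) R.
Definition labels_seq (s : sequent) : list label :=
  labels_rel (rel s) ++ map fst (lhs s) ++ map fst (rhs s).
Definition fresh (y : label) (s : sequent) : Prop := ~ In y (labels_seq s).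

(* Rule instances of labK4 on concrete representatives:
   [basic concl prems] *)
Inductive basic : sequent -> list sequent -> Prop :=
| r_id : forall R x p,
    basic (Seq R [(x, Var p)] [(x, Var p)]) []
| r_botL : forall R x G D,
    basic (Seq R ((x, Bot) :: G) D) []
| r_cut : forall R G G' D D' x A,
    basic (Seq R (G ++ G') (D ++ D'))
          [Seq R G (D ++ [(x, A)]); Seq R (G' ++ [(x, A)]) D']
| r_wL : forall R G D a,
    basic (Seq R (G ++ [a]) D) [Seq R G D]
| r_wR : forall R G D a,
    basic (Seq R G (D ++ [a])) [Seq R G D]
| r_cL : forall R G D a,
    basic (Seq R (G ++ [a]) D) [Seq R (G ++ [a; a]) D]
| r_cR : forall R G D a,
    basic (Seq R G (D ++ [a])) [Seq R G (D ++ [a; a])]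
| r_thin : forall R R' G D,
    basic (Seq (R ++ R') G D) [Seq R G D]
| r_impL : forall R G G' D D' x A B,
    basic (Seq R (G ++ G' ++ [(x, Imp A B)]) (D ++ D'))
          [Seq R G (D ++ [(x, A)]); Seq R (G' ++ [(x, B)]) D']
| r_impR : forall R G D x A B,
    basic (Seq R G (D ++ [(x, Imp A B)])) [Seq R (G ++ [(x, A)]) (D ++ [(x, B)])]
| r_andL1 : forall R G D x A B,
    basic (Seq R (G ++ [(x, And A B)]) D) [Seq R (G ++ [(x, A)]) D]
| r_andL2 : forall R G D x A B,
    basic (Seq R (G ++ [(x, And A B)]) D) [Seq R (G ++ [(x, B)]) D]
| r_andR : forall R G D x A B,
    basic (Seq R G (D ++ [(x, And A B)]))
          [Seq R G (D ++ [(x, A)]); Seq R G (D ++ [(x, B)])]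
| r_orL : forall R G D x A B,
    basic (Seq R (G ++ [(x, Or A B)]) D)
          [Seq R (G ++ [(x, A)]) D; Seq R (G ++ [(x, B)]) D]
| r_orR1 : forall R G D x A B,
    basic (Seq R G (D ++ [(x, Or A B)])) [Seq R G (D ++ [(x, A)])]
| r_orR2 : forall R G D x A B,
    basic (Seq R G (D ++ [(x, Or A B)])) [Seq R G (D ++ [(x, B)])]
| r_diaL : forall R G D x y A,
    fresh y (Seq R (G ++ [(x, Dia A)]) D) ->
    basic (Seq R (G ++ [(x, Dia A)]) D) [Seq ((x, y) :: R) (G ++ [(y, A)]) D]
| r_diaR : forall R G D x y A,
    basic (Seq ((x, y) :: R) G (D ++ [(x, Dia A)]))
          [Seq ((x, y) :: R) G (D ++ [(y, A)])]
| r_boxR : forall R G D x y A,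
    fresh y (Seq R G (D ++ [(x, Box A)])) ->
    basic (Seq R G (D ++ [(x, Box A)])) [Seq ((x, y) :: R) G (D ++ [(y, A)])]
| r_boxL : forall R G D x y A,
    basic (Seq ((x, y) :: R) (G ++ [(x, Box A)]) D)
          [Seq ((x, y) :: R) (G ++ [(y, A)]) D]
| r_tr : forall R G D x y z,
    basic (Seq ((x, y) :: (y, z) :: R) G D)
          [Seq ((x, z) :: (x, y) :: (y, z) :: R) G D].

Definition seq_eq (s t : sequent) : Prop :=
  (forall a, In a (rel s) <-> In a (rel t)) /\
  Permutation (lhs s) (lhs t) /\ Permutation (rhs s) (rhs t).

Definition ruleK4 (c : sequent) (ps : list sequent) : Prop :=
  exists c0 ps0, seq_eq c c0 /\ Forall2 seq_eq ps ps0 /\ basic c0 ps0.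

Definition ruleIK4 (c : sequent) (ps : list sequent) : Prop :=
  ruleK4 c ps /\ length (rhs c) = 1 /\ Forall (fun p => length (rhs p) = 1) ps.

(* A possibly infinite tree: nodes are addressed by paths (list of child
   indices); [T p = Some s] means node p exists and is labelled by s. *)
Definition tree := list nat -> option sequent.

Definition preproof (r : sequent -> list sequent -> Prop) (T : tree)
    (s0 : sequent) : Prop :=
  T [] = Some s0 /\
  forall p s, T p = Some s ->
    exists ps, r s ps /\
      (forall i, i < length ps -> T (p ++ [i]) = nth_error ps i) /\
      (forall i, length ps <= i -> T (p ++ [i]) = None).

Definition bpath (b : nat -> nat) (n : nat) : list nat := map b (seq 0 n).

Definition inf_branch (T : tree) (b : nat -> nat) (Sq : nat -> sequent) : Prop :=
  forall i, T (bpath b i) = Some (Sq i).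

Definition progress_point (Sq : nat -> sequent) (xs : nat -> label) (i : nat) : Prop :=
  In (xs i, xs (Datatypes.S i)) (rel (Sq i)).

Definition is_trace (Sq : nat -> sequent) (k : nat) (xs : nat -> label) : Prop :=
  forall i, k <= i -> xs i = xs (Datatypes.S i) \/ progress_point Sq xs i.

Definition progressing (Sq : nat -> sequent) (k : nat) (xs : nat -> label) : Prop :=
  is_trace Sq k xs /\
  forall n, exists i, n <= i /\ k <= i /\ progress_point Sq xs i.

Definition inf_proof (r : sequent -> list sequent -> Prop) (T : tree)
    (s0 : sequent) : Prop :=
  preproof r T s0 /\
  forall b Sq, inf_branch T b Sq -> exists k xs, progressing Sq k xs.

Definition labIGL_provable (s : sequent) : Prop :=
  exists T, inf_proof ruleIK4 T s.

(* Main.v *)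
Require Import Defs.
From Stdlib Require Import List Permutation Arith Lia.
Import ListNotations.

Definition lmax (l : list nat) : nat := fold_right max 0 l.
Lemma lmax_ge : forall l a, In a l -> a <= lmax l.
Proof. induction l; simpl; intros b H; [contradiction|]. destruct H; subst; [lia|].
  specialize (IHl _ H). lia. Qed.
Definition freshl (s : sequent) : label := S (lmax (labels_seq s)).
Lemma freshl_fresh : forall s, fresh (freshl s) s.
Proof. intros s H. apply lmax_ge in H. unfold freshl in H. lia. Qed.

Fixpoint fsize (B : form) : nat :=
  match B with
  | Var _ | Bot => 0
  | And a b | Or a b | Imp a b => 1 + fsize a + fsize b
  | Box a | Dia a => 1 + fsize a
  end.

Inductive node :=
| NRoot (x : label) | NS1 (x : label) | NS2 (x y : label) | NS3 (x y : label)
| NS4 (x y : label) | NP1 (x y : label) | NQ (x y z : label) | NTr (x y z : label)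
| NId (R : list ratom) (y : label) (B : form)
| NAndL1 (R : list ratom) (y : label) (B C : form)
| NAndL2 (R : list ratom) (y : label) (B C : form)
| NOrR1 (R : list ratom) (y : label) (B C : form)
| NOrR2 (R : list ratom) (y : label) (B C : form)
| NImpR (R : list ratom) (y : label) (B C : form)
| NBoxL (R : list ratom) (y z : label) (B : form)
| NDiaR (R : list ratom) (y z : label) (B : form).

Section Main.
Variable A : form.
Definition F := Box (Imp (Box A) A).

Definition seqof (m : node) : sequent :=
  match m with
  | NRoot x => Seq [] [] [(x, Imp F (Box A))]
  | NS1 x => Seq [] [(x,F)] [(x,Box A)]
  | NS2 x y => Seq [(x,y)] [(x,F)] [(y,A)]
  | NS3 x y => Seq [(x,y)] [(x,F);(x,F)] [(y,A)]
  | NS4 x y => Seq [(x,y)] [(x,F);(y,Imp (Box A) A)] [(y,A)]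
  | NP1 x y => Seq [(x,y)] [(x,F)] [(y,Box A)]
  | NQ x y z => Seq [(y,z);(x,y)] [(x,F)] [(z,A)]
  | NTr x y z => Seq [(x,z);(x,y);(y,z)] [(x,F)] [(z,A)]
  | NId R y B => Seq R [(y,B)] [(y,B)]
  | NAndL1 R y B C => Seq R [(y,And B C)] [(y,B)]
  | NAndL2 R y B C => Seq R [(y,And B C)] [(y,C)]
  | NOrR1 R y B C => Seq R [(y,B)] [(y,Or B C)]
  | NOrR2 R y B C => Seq R [(y,C)] [(y,Or B C)]
  | NImpR R y B C => Seq R [(y,Imp B C); (y,B)] [(y,C)]
  | NBoxL R y z B => Seq ((y,z)::R) [(y,Box B)] [(z,B)]
  | NDiaR R y z B => Seq ((y,z)::R) [(z,B)] [(y,Dia B)]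
  end.

Definition kids (m : node) : list node :=
  match m with
  | NRoot x => [NS1 x]
  | NS1 x => [NS2 x (freshl (seqof (NS1 x)))]
  | NS2 x y => [NS3 x y]
  | NS3 x y => [NS4 x y]
  | NS4 x y => [NP1 x y; NId [(x,y)] y A]
  | NP1 x y => [NQ x y (freshl (seqof (NP1 x y)))]
  | NQ x y z => [NTr x y z]
  | NTr x y z => [NS2 x z]
  | NId R y B =>
      match B with
      | Var _ | Bot => []
      | And B C => [NAndL1 R y B C; NAndL2 R y B C]
      | Or B C => [NOrR1 R y B C; NOrR2 R y B C]
      | Imp B C => [NImpR R y B C]
      | Box B => [NBoxL R y (freshl (Seq R [(y,Box B)] [(y,Box B)])) B]
      | Dia B => [NDiaR R y (freshl (Seq R [(y,Dia B)] [(y,Dia B)])) B]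
      end
  | NAndL1 R y B C => [NId R y B]
  | NAndL2 R y B C => [NId R y C]
  | NOrR1 R y B C => [NId R y B]
  | NOrR2 R y B C => [NId R y C]
  | NImpR R y B C => [NId R y B; NId R y C]
  | NBoxL R y z B => [NId ((y,z)::R) z B]
  | NDiaR R y z B => [NId ((y,z)::R) z B]
  end.

Lemma seq_eq_refl : forall s, seq_eq s s.
Proof. intros s; split; [tauto| split; apply Permutation_refl]. Qed.
Lemma Forall2_refl_seq : forall l, Forall2 seq_eq l l.
Proof. induction l; constructor; auto using seq_eq_refl. Qed.

Lemma rule_ok : forall m, ruleIK4 (seqof m) (map seqof (kids m)).
Proof.
  intros m. split; [| split; [destruct m; reflexivity|
    destruct m as [| | | | | | | |R y B| | | | | | |]; try destruct B; simpl; repeat constructor]].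
  destruct m as [x|x|x y|x y|x y|x y|x y z|x y z|R y B|R y B C|R y B C|R y B C|R y B C|R y B C|R y z B|R y z B].
  - exists (seqof (NRoot x)), (map seqof (kids (NRoot x))).
    split; [apply seq_eq_refl|split; [apply Forall2_refl_seq|]].
    exact (r_impR [] [] [] x F (Box A)).
  - exists (seqof (NS1 x)), (map seqof (kids (NS1 x))).
    split; [apply seq_eq_refl|split; [apply Forall2_refl_seq|]].
    apply (r_boxR [] [(x,F)] [] x _ A). apply freshl_fresh.
  - exists (seqof (NS2 x y)), (map seqof (kids (NS2 x y))).
    split; [apply seq_eq_refl|split; [apply Forall2_refl_seq|]].
    exact (r_cL [(x,y)] [] [(y,A)] (x,F)).
  - exists (seqof (NS3 x y)), (map seqof (kids (NS3 x y))).
    split; [apply seq_eq_refl|split; [apply Forall2_refl_seq|]].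
    exact (r_boxL [] [(x,F)] [(y,A)] x y (Imp (Box A) A)).
  - exists (seqof (NS4 x y)), (map seqof (kids (NS4 x y))).
    split; [apply seq_eq_refl|split; [apply Forall2_refl_seq|]].
    exact (r_impL [(x,y)] [(x,F)] [] [] [(y,A)] y (Box A) A).
  - exists (seqof (NP1 x y)), (map seqof (kids (NP1 x y))).
    split; [apply seq_eq_refl|split; [apply Forall2_refl_seq|]].
    apply (r_boxR [(x,y)] [(x,F)] [] y _ A). apply freshl_fresh.
  - exists (Seq [(x,y);(y,z)] [(x,F)] [(z,A)]), (map seqof (kids (NQ x y z))).
    split; [|split; [apply Forall2_refl_seq|]].
    + split; [simpl; intros a; tauto| split; apply Permutation_refl].
    + exact (r_tr [] [(x,F)] [(z,A)] x y z).
  - exists (seqof (NTr x y z)), (map seqof (kids (NTr x y z))).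
    split; [apply seq_eq_refl|split; [apply Forall2_refl_seq|]].
    exact (r_thin [(x,z)] [(x,y);(y,z)] [(x,F)] [(z,A)]).
  - destruct B as [p| |B C|B C|B C|B|B].
    + exists (seqof (NId R y (Var p))), []. split; [apply seq_eq_refl|split; [constructor|]].
      apply r_id.
    + exists (seqof (NId R y Bot)), []. split; [apply seq_eq_refl|split; [constructor|]].
      exact (r_botL R y [] [(y,Bot)]).
    + exists (seqof (NId R y (And B C))), (map seqof (kids (NId R y (And B C)))).
      split; [apply seq_eq_refl|split; [apply Forall2_refl_seq|]].
      exact (r_andR R [(y,And B C)] [] y B C).
    + exists (seqof (NId R y (Or B C))), (map seqof (kids (NId R y (Or B C)))).
      split; [apply seq_eq_refl|split; [apply Forall2_refl_seq|]].
      exact (r_orL R [] [(y,Or B C)] y B C).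
    + exists (seqof (NId R y (Imp B C))), (map seqof (kids (NId R y (Imp B C)))).
      split; [apply seq_eq_refl|split; [apply Forall2_refl_seq|]].
      exact (r_impR R [(y,Imp B C)] [] y B C).
    + exists (seqof (NId R y (Box B))), (map seqof (kids (NId R y (Box B)))).
      split; [apply seq_eq_refl|split; [apply Forall2_refl_seq|]].
      apply (r_boxR R [(y,Box B)] [] y _ B). apply freshl_fresh.
    + exists (seqof (NId R y (Dia B))), (map seqof (kids (NId R y (Dia B)))).
      split; [apply seq_eq_refl|split; [apply Forall2_refl_seq|]].
      apply (r_diaL R [] [(y,Dia B)] y _ B). apply freshl_fresh.
  - exists (seqof (NAndL1 R y B C)), (map seqof (kids (NAndL1 R y B C))).
    split; [apply seq_eq_refl|split; [apply Forall2_refl_seq|]].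
    exact (r_andL1 R [] [(y,B)] y B C).
  - exists (seqof (NAndL2 R y B C)), (map seqof (kids (NAndL2 R y B C))).
    split; [apply seq_eq_refl|split; [apply Forall2_refl_seq|]].
    exact (r_andL2 R [] [(y,C)] y B C).
  - exists (seqof (NOrR1 R y B C)), (map seqof (kids (NOrR1 R y B C))).
    split; [apply seq_eq_refl|split; [apply Forall2_refl_seq|]].
    exact (r_orR1 R [(y,B)] [] y B C).
  - exists (seqof (NOrR2 R y B C)), (map seqof (kids (NOrR2 R y B C))).
    split; [apply seq_eq_refl|split; [apply Forall2_refl_seq|]].
    exact (r_orR2 R [(y,C)] [] y B C).
  - exists (Seq R [(y,B); (y,Imp B C)] [(y,C)]), (map seqof (kids (NImpR R y B C))).
    split; [|split; [apply Forall2_refl_seq|]].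
    + split; [simpl; tauto| split; [apply perm_swap| apply Permutation_refl]].
    + exact (r_impL R [(y,B)] [] [] [(y,C)] y B C).
  - exists (seqof (NBoxL R y z B)), (map seqof (kids (NBoxL R y z B))).
    split; [apply seq_eq_refl|split; [apply Forall2_refl_seq|]].
    exact (r_boxL R [] [(z,B)] y z B).
  - exists (seqof (NDiaR R y z B)), (map seqof (kids (NDiaR R y z B))).
    split; [apply seq_eq_refl|split; [apply Forall2_refl_seq|]].
    exact (r_diaR R [(z,B)] [] y z B).
Qed.

End Main.

Definition isid (m : node) : bool :=
  match m with
  | NId _ _ _ | NAndL1 _ _ _ _ | NAndL2 _ _ _ _ | NOrR1 _ _ _ _ | NOrR2 _ _ _ _
  | NImpR _ _ _ _ | NBoxL _ _ _ _ | NDiaR _ _ _ _ => true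
  | _ => false
  end.

Definition msr (m : node) : nat :=
  match m with
  | NId _ _ B => 2 * fsize B
  | NAndL1 _ _ B C | NAndL2 _ _ B C | NOrR1 _ _ B C | NOrR2 _ _ B C
  | NImpR _ _ B C => 2 * (fsize B + fsize C) + 1
  | NBoxL _ _ _ B | NDiaR _ _ _ B => 2 * fsize B + 1
  | _ => 0
  end.

Definition dist (m : node) : nat :=
  match m with
  | NRoot _ => 6 | NS1 _ => 5 | NS2 _ _ => 4 | NS3 _ _ => 3 | NS4 _ _ => 2
  | NP1 _ _ => 1 | NQ _ _ _ => 0 | NTr _ _ _ => 5 | _ => 0
  end.

Definition lab (A : form) (m : node) : label :=
  match m with
  | NRoot x => freshl (seqof A (NS1 x))
  | NS1 x => freshl (seqof A (NS1 x))
  | NS2 _ y | NS3 _ y | NS4 _ y | NP1 _ y => y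
  | NQ _ y _ => y
  | NTr _ _ z => z
  | _ => 0
  end.

Lemma kids_id : forall A m m', isid m = true -> In m' (kids A m) ->
  isid m' = true /\ msr m' < msr m.
Proof.
  intros A m m' H1 H2.
  destruct m; try discriminate; try (destruct B); simpl in H2;
  repeat (destruct H2 as [H2|H2]; [subst; simpl; lia|]); contradiction.
Qed.

Lemma kids_loop : forall A m m', isid m = false -> In m' (kids A m) -> isid m' = false ->
  (dist m = S (dist m') \/ (dist m = 0 /\ exists x y z, m = NQ x y z)) /\
  (lab A m = lab A m' \/ In (lab A m, lab A m') (rel (seqof A m))).
Proof.
  intros A m m' H1 H2 H3.
  destruct m; try discriminate; simpl in H2;
  repeat (destruct H2 as [H2|H2]; [subst; simpl in *; try discriminate;
     try (split; [left; reflexivity| left; reflexivity]) |]); try contradiction.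
  split; [right; split; [reflexivity| eauto]| right; simpl; auto].
Qed.

Fixpoint walk (A : form) (m : node) (p : list nat) : option node :=
  match p with
  | [] => Some m
  | i :: q => match nth_error (kids A m) i with Some m' => walk A m' q | None => None end
  end.

Lemma walk_snoc : forall A p m i, walk A m (p ++ [i]) =
  match walk A m p with Some m' => nth_error (kids A m') i | None => None end.
Proof.
  induction p; simpl; intros m i.
  - destruct (nth_error (kids A m) i); reflexivity.
  - destruct (nth_error (kids A m) a); auto.
Qed.

Definition theTree (A : form) (x : label) : tree :=
  fun p => option_map (seqof A) (walk A (NRoot x) p).

Lemma bpath_S : forall b n, bpath b (S n) = bpath b n ++ [b n].
Proof. intros b n. unfold bpath. rewrite seq_S, map_app. reflexivity. Qed.

Theorem mainTheorem15 : forall (A : form) (x : label),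
  labIGL_provable (Seq [] [] [(x, Imp (Box (Imp (Box A) A)) (Box A))]).
Proof.
  intros A x. exists (theTree A x). split.
  - split; [reflexivity|].
    intros p s Hs. unfold theTree in Hs.
    destruct (walk A (NRoot x) p) as [m|] eqn:Hw; [|discriminate].
    simpl in Hs. injection Hs as <-.
    exists (map (seqof A) (kids A m)). split; [apply rule_ok|split].
    + intros i Hi. unfold theTree. rewrite walk_snoc, Hw, nth_error_map. reflexivity.
    + intros i Hi. unfold theTree. rewrite walk_snoc, Hw.
      assert (nth_error (kids A m) i = None) as ->.
      { apply nth_error_None. rewrite length_map in Hi. exact Hi. }
      reflexivity.
  - intros b Sq Hb.
    set (M := fun i => walk A (NRoot x) (bpath b i)).
    assert (HM : forall i, exists m, M i = Some m /\ Sq i = seqof A m).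
    { intros i. specialize (Hb i). unfold theTree in Hb. unfold M.
      destruct (walk A (NRoot x) (bpath b i)) as [m|]; [|discriminate].
      injection Hb as <-. eauto. }
    assert (Hstep : forall i m m', M i = Some m -> M (S i) = Some m' -> In m' (kids A m)).
    { intros i m m' H1 H2. unfold M in *. rewrite bpath_S, walk_snoc, H1 in H2.
      eapply nth_error_In; eauto. }
    assert (Hnoid : forall n i m, M i = Some m -> isid m = true -> msr m <= n -> False).
    { induction n; intros i m H1 H2 H3;
      destruct (HM (S i)) as [m' [H4 _]];
      destruct (kids_id A m m' H2 (Hstep _ _ _ H1 H4)) as [H5 H6].
      - lia.
      - apply (IHn (S i) m' H4 H5). lia. }
    assert (Hnoid' : forall i m, M i = Some m -> isid m = false).
    { intros i m H. destruct (isid m) eqn:E; auto. exfalso. eapply Hnoid; eauto. }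
    set (xs := fun i => match M i with Some m => lab A m | None => 0 end).
    exists 0, xs. split.
    + intros i _. destruct (HM i) as [m [H1 H1']]. destruct (HM (S i)) as [m' [H2 H2']].
      unfold progress_point, xs. rewrite H1, H2, H1'.
      destruct (kids_loop A m m' (Hnoid' _ _ H1) (Hstep _ _ _ H1 H2) (Hnoid' _ _ H2)) as [_ H].
      exact H.
    + assert (Hd : forall d i m, M i = Some m -> dist m <= d ->
                exists j, i <= j /\ exists x y z, M j = Some (NQ x y z)).
      { induction d; intros i m H1 H2.
        - destruct (HM (S i)) as [m' [H3 _]].
          destruct (kids_loop A m m' (Hnoid' _ _ H1) (Hstep _ _ _ H1 H3) (Hnoid' _ _ H3)) as [[H|[_ H]] _].
          + lia.
          + exists i. split; [lia|]. destruct H as (x0 & y0 & z0 & ->). eauto.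
        - destruct (HM (S i)) as [m' [H3 _]].
          destruct (kids_loop A m m' (Hnoid' _ _ H1) (Hstep _ _ _ H1 H3) (Hnoid' _ _ H3)) as [[H|[_ H]] _].
          + destruct (IHd (S i) m' H3 ltac:(lia)) as [j [Hj1 Hj2]]. exists j. split; [lia|exact Hj2].
          + exists i. split; [lia|]. destruct H as (x0 & y0 & z0 & ->). eauto. }
      intros n. destruct (HM n) as [m [H1 _]].
      destruct (Hd (dist m) n m H1 (le_n _)) as [j [Hj (x0 & y0 & z0 & Hq)]].
      exists j. split; [exact Hj|split; [lia|]].
      destruct (HM j) as [mj [Hmj Hsj]]. rewrite Hq in Hmj. injection Hmj as <-.
      destruct (HM (S j)) as [m' [H2 H2']].
      pose proof (Hstep _ _ _ Hq H2) as Hk. simpl in Hk. destruct Hk as [<-|[]].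
      unfold progress_point, xs. rewrite Hq, H2, Hsj. simpl. auto.
Qed.
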